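(* Both identities $((xy)z)(xy)=((yx)z)(yx)$ and $(z(yx))(xy)=(z(xy))(yx)$ are consequences of $\mathcal{B}_{1,2,4}$, where $\mathcal{B}_{1,2,4}$ consists of (M1) $(xy)(zt)=(xz)(yt)$, (M2) $(xy)(zt)=(ty)(zx)$, (M3) $((xy)z)t=((xt)z)y$, (M4) $(x(yz))t=(x(tz))y$, (M5) $x((yz)t)=z((yx)t)$, (M6) $x(y(zt))=z(y(xt))$, and $x(x(yz))=(x(zy))x$. *)

(* Defs.v *)
Definition B124 (T : Type) (m : T -> T -> T) : Prop :=
  (forall x y z t : T, m (m x y) (m z t) = m (m x z) (m y t)) /\
  (forall x y z t : T, m (m x y) (m z t) = m (m t y) (m z x)) /\
  (forall x y z t : T, m (m (m x y) z) t = m (m (m x t) z) y) /\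
  (forall x y z t : T, m (m x (m y z)) t = m (m x (m t z)) y) /\
  (forall x y z t : T, m x (m (m y z) t) = m z (m (m y x) t)) /\
  (forall x y z t : T, m x (m y (m z t)) = m z (m y (m x t))) /\
  (forall x y z : T, m x (m x (m y z)) = m (m x (m z y)) x).

(* Main.v *)
Require Import Defs.

Theorem lemma6p1 (T : Type) (m : T -> T -> T) :
  B124 T m ->
  (forall x y z : T, m (m (m x y) z) (m x y) = m (m (m y x) z) (m y x)) /\
  (forall x y z : T, m (m z (m y x)) (m x y) = m (m z (m x y)) (m y x)).
Proof.
  intros [M1 [M2 [M3 [M4 [M5 [M6 M7]]]]]].
  split; intros x y z.
  -
  transitivity (m (m (m x y) x) (m z y)); [exact (f_equal (fun h => h) (M1 (m x y) z x y))|].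
  transitivity (m (m (m x (m z y)) x) y); [exact (f_equal (fun h => h) (M3 x y x (m z y)))|].
  transitivity (m (m x (m x (m y z))) y); [exact (f_equal (fun h => (m h y)) (eq_sym (M7 x y z)))|].
  transitivity (m (m y (m x (m x z))) y); [exact (f_equal (fun h => (m h y)) (M6 x x y z))|].
  transitivity (m y (m y (m (m x z) x))); [exact (f_equal (fun h => h) (eq_sym (M7 y (m x z) x)))|].
  transitivity (m (m x z) (m y (m y x))); [exact (f_equal (fun h => h) (M6 y y (m x z) x))|].
  transitivity (m (m (m y x) z) (m y x)); [exact (f_equal (fun h => h) (M2 x z y (m y x)))|].
  reflexivity.
  -
  transitivity (m (m z x) (m (m y x) y)); [exact (f_equal (fun h => h) (M1 z (m y x) x y))|].
  transitivity (m x (m (m y (m z x)) y)); [exact (f_equal (fun h => h) (M5 (m z x) y x y))|].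
  transitivity (m x (m y (m y (m x z)))); [exact (f_equal (fun h => (m x h)) (eq_sym (M7 y x z)))|].
  transitivity (m x (m x (m y (m y z)))); [exact (f_equal (fun h => (m x h)) (M6 y y x z))|].
  transitivity (m (m x (m (m y z) y)) x); [exact (f_equal (fun h => h) (M7 x y (m y z)))|].
  transitivity (m (m x (m x y)) (m y z)); [exact (f_equal (fun h => h) (M4 x (m y z) y x))|].
  transitivity (m (m z (m x y)) (m y x)); [exact (f_equal (fun h => h) (M2 x (m x y) y z))|].
  reflexivity.
Qed.
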